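(* Let $G$ and $H$ be graphs with $|V(G)|=4$ and $|V(H)|=3$. Then the join $G+H$ is not of class $\mathcal C_0$.
   Context: All graphs are finite, simple and undirected. The join $G+H$ is obtained from vertex-disjoint copies of $G$ and $H$ by adding all edges between $V(G)$ and $V(H)$. A drawing is 1-planar if each edge is crossed at most once (adjacent edges never cross, no edge crosses itself); a graph is 1-planar if it has such a drawing. For a 1-planar drawing $D$, $D^\times$ is the plane graph obtained by turning each crossing into a new degree-4 vertex (a false vertex); $N_{D^\times}(c)$ is the neighbour set of a false vertex $c$. A 1-planar graph is of class $\mathcal C_0$ if it has a 1-planar drawing $D$ with $|N_{D^\times}(c_1)\cap N_{D^\times}(c_2)|=0$ for all distinct false vertices $c_1,c_2$. *)

(* Defs.v *)
From mathcomp Require Import all_boot.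
From mathcomp Require Import fingroup perm.
Set Implicit Arguments. Unset Strict Implicit. Unset Printing Implicit Defensive.

Definition simple_graph (T : finType) (e : rel T) : Prop :=
  symmetric e /\ irreflexive e.

Definition join (T1 T2 : finType) (g : rel T1) (h : rel T2) : rel (T1 + T2) :=
  fun x y => match x, y with
  | inl a, inl b => g a b
  | inr a, inr b => h a b
  | _, _ => true
  end.

Notation darts P := {p | P p.1 p.2}.

(* (sigma, alpha) is a combinatorial map of the graph P whose faces are the
   orbits of sigma \o alpha, and it has genus 0 (Euler's formula holds
   component-wise: V - E + F = 2c - #isolated vertices).
   By the Heffter-Edmonds-Ringel rotation principle these are exactly the
   plane embeddings of P up to homeomorphism. *)
Definition plane_map (V : finType) (P : rel V) (sigma alpha : {perm darts P}) : Prop :=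
  [/\ (forall d : darts P, (val (alpha d)).1 = (val d).2 /\ (val (alpha d)).2 = (val d).1),
      (forall d : darts P, (val (sigma d)).1 = (val d).1),
      (forall d d' : darts P, (val d).1 = (val d').1 -> fconnect sigma d d')
    & 2 * (#|V| + fcard (sigma \o alpha) predT + #|[pred v : V | [forall w, ~~ P v w]]|)
      = #|{: darts P}| + 4 * n_comp (connect P) predT].

Section OnePlanar.
Variables (T : finType) (e : rel T).

Definition ends4 (q : (T * T) * (T * T)) : seq T := [:: q.1.1; q.1.2; q.2.1; q.2.2].
Definition slot (q : (T * T) * (T * T)) (s : bool) : T * T := if s then q.1 else q.2.
Definition same_edge (p q : T * T) : bool :=
  ((p.1 == q.1) && (p.2 == q.2)) || ((p.1 == q.2) && (p.2 == q.1)).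

(* k crossings; each crosses two edges of e with 4 distinct endpoints
   (adjacent edges never cross, no self-crossing), and every edge is crossed
   at most once. *)
Definition crossings_ok (k : nat) (cr : 'I_k -> (T * T) * (T * T)) : Prop :=
  (forall i, [/\ e (cr i).1.1 (cr i).1.2, e (cr i).2.1 (cr i).2.2 & uniq (ends4 (cr i))]) /\
  (forall i j (s t : bool), same_edge (slot (cr i) s) (slot (cr j) t) -> i = j /\ s = t).

Definition crossed (k : nat) (cr : 'I_k -> (T * T) * (T * T)) (u v : T) : bool :=
  [exists i, same_edge (u, v) (cr i).1 || same_edge (u, v) (cr i).2].

(* The planarization D^x: original vertices plus one false vertex per crossing. *)
Definition planarization (k : nat) (cr : 'I_k -> (T * T) * (T * T)) : rel (T + 'I_k) :=
  fun x y => match x, y with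
  | inl u, inl v => e u v && ~~ crossed cr u v
  | inl u, inr i => u \in ends4 (cr i)
  | inr i, inl u => u \in ends4 (cr i)
  | inr _, inr _ => false
  end.

(* A 1-planar drawing: crossings, plus a plane embedding of the planarization
   in which the two edges genuinely cross at each false vertex (opposite in
   the rotation). *)
Definition one_planar_drawing (k : nat) (cr : 'I_k -> (T * T) * (T * T))
  (sigma alpha : {perm darts (planarization cr)}) : Prop :=
  [/\ crossings_ok cr, plane_map sigma alpha &
      forall (i : 'I_k) (d : darts (planarization cr)),
        (val d).1 = inr i -> (val d).2 = inl (cr i).1.1 ->
        (val (sigma (sigma d))).2 = inl (cr i).1.2].

(* N_{D^x}(c) for the false vertex of crossing i is ends4 (cr i). *)
Definition class_C0 : Prop :=
  exists (k : nat) (cr : 'I_k -> (T * T) * (T * T))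
         (sigma alpha : {perm darts (planarization cr)}),
    one_planar_drawing sigma alpha /\
    (forall i j : 'I_k, i != j -> [disjoint ends4 (cr i) & ends4 (cr j)]).

End OnePlanar.

(* Main.v *)
Require Import Defs.
From mathcomp Require Import all_boot.
From mathcomp Require Import fingroup perm zify.
Set Implicit Arguments. Unset Strict Implicit. Unset Printing Implicit Defensive.
Local Notation forder := fingraph.order.

Section FcardGe.
Variables (T : finType) (f : T -> T).
Hypothesis finj : injective f.

Lemma fcard_order_ge n (a : {pred T}) :
  (forall x, x \in a -> n <= forder f x) -> fclosed f a -> fcard f a * n <= #|a|.
Proof.
move=> a_n cl_a; have symf := fconnect_sym finj.
rewrite /n_comp_mem; set b := [predI froots f & a].
suff <-: #|preim (froot f) b| = #|a|.
  have{a_n} (x): b x -> froot f x = x /\ n <= forder f x.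
    by case/andP=> /eqP-> /a_n.
  move=> fb; suff H : forall m (b' : {pred T}), #|b'| == m ->
    (forall x, b' x -> froot f x = x /\ n <= forder f x) ->
    m * n <= #|preim (froot f) b'| by apply: H.
  elim=> [|m IHm] b' def_m f_b; first by rewrite mul0n.
  have [x b_x | b0] := pickP b'; last by rewrite (eq_card0 b0) in def_m.
  have [r_x ox_n] := f_b x b_x; rewrite (cardD1 x) [x \in b']b_x eqSS in def_m.
  rewrite mulSn -(cardID (fconnect f x)); apply: leq_add.
    apply: (leq_trans ox_n); rewrite /fingraph.order; apply: subset_leq_card.
    apply/subsetP => y fxy; rewrite !inE; apply/andP; split=> //=.
    rewrite /in_mem /=.
    by rewrite -(rootP symf fxy) r_x.
  apply: leq_trans (IHm _ def_m _) _ => [y /andP[_ /f_b //] |].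
  apply: subset_leq_card; apply/subsetP => y; rewrite !inE.
  move=> /andP[nx by']; rewrite [b' _]by' andbT.
  by rewrite symf -(root_connect symf) r_x.
apply: eq_card => x; rewrite !inE (roots_root symf).
exact/esym/(closed_connect cl_a)/connect_root.
Qed.
End FcardGe.

Lemma card_darts_ge (V : finType) (P : rel V) (Q : pred (V * V)) :
  #|[pred p : V * V | P p.1 p.2 && Q p]| <= #|[pred d : darts P | Q (val d)]|.
Proof.
rewrite -(card_image val_inj); apply: subset_leq_card; apply/subsetP => p.
rewrite !inE => /andP[Pp Qp]; apply/imageP.
by exists (exist (fun p => P p.1 p.2) p Pp).
Qed.

Section Core.
Variables (V : finType) (P : rel V) (sigma alpha : {perm darts P}).
Hypothesis pm : plane_map sigma alpha.
Hypothesis Psym : symmetric P.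
Hypothesis Pirr : irreflexive P.
Hypothesis Pdeg : forall x y, P x y -> exists z, P x z /\ z != y.

Local Notation phi := (sigma \o alpha).

Lemma phi_inj : injective phi.
Proof. by apply: inj_comp; apply: perm_inj. Qed.

Lemma src_phi d : (val (phi d)).1 = (val d).2.
Proof. by case: pm => Ha Hs _ _; rewrite /= Hs; case: (Ha d). Qed.

Lemma order_ge3 d : 3 <= forder phi d.
Proof.
case: pm => Ha Hs Hc _.
have fix1 : forall x, phi x != x.
  move=> x; apply/eqP => Ex; have := valP x; rewrite /=.
  have := src_phi x; rewrite Ex => <-; by rewrite Pirr.
have := fingraph.order_gt0 phi d; case Eo: (forder phi d) => [|[|[|n]]] // _.
  by have := fingraph.iter_order phi_inj d; rewrite Eo /= => /eqP; rewrite (negbTE (fix1 d)).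
have := fingraph.iter_order phi_inj d; rewrite Eo /= => E2.
pose a := alpha d.
have Ev : val (phi d) = val a.
  have h1 := src_phi d; have h2 := src_phi (phi d); rewrite /= E2 in h2.
  case: (Ha d) => a1 a2.
  rewrite /a [LHS]surjective_pairing [RHS]surjective_pairing h1 a1 a2.
  by rewrite /= -h2.
have Efa : sigma a = a by apply: val_inj; rewrite -Ev.
have := valP a; rewrite /= => Pa.
have [z [Pz Nz]] := Pdeg Pa.
pose d' : darts P := exist _ ((val a).1, z) Pz.
have := Hc a d' erefl => /iter_findex; rewrite iter_fix // => Ed.
by move: Nz; rewrite Ed /=; case: (val a) => ? ?; rewrite /= eqxx.
Qed.


Lemma order_phi d : forder phi (phi d) = forder phi d.
Proof. by rewrite /fingraph.order; apply/esym/eq_card; exact: same_fconnect1 phi_inj d. Qed.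

Lemma core (v0 : V) (Sp : pred (darts P)) :
  (forall d, forder phi d = 3 -> exists j, Sp (iter j phi d)) ->
  #|[predC Sp]| + 8 <= 4 * (#|V| + #|[pred v : V | [forall w, ~~ P v w]]|).
Proof.
move=> Htri.
have symf := fconnect_sym phi_inj.
case: (pm) => _ _ _ HE.
set iso := #|[pred v : V | _]| in HE *.
have Hc : 1 <= n_comp (connect P) predT.
  have symc : connect_sym (connect P).
    apply: sym_connect_sym; exact: sym_connect_sym.
  apply/card_gt0P; exists (root (connect P) v0); rewrite !inE andbT.
  exact: roots_root.
pose A3 : {pred darts P} := [pred x | forder phi x == 3].
have clA : fclosed phi A3.
  by move=> x y /eqP <-; rewrite !inE order_phi.
have HF : fcard phi predT = fcard phi A3 + fcard phi [predC A3].
  by rewrite -n_compC; apply: eq_n_comp_r.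
have H3 : fcard phi A3 * 3 = #|A3|.
  apply: (fcard_order_set phi_inj _ clA); by apply/subsetP => x.
have H4 : fcard phi [predC A3] * 4 <= #|[predC A3]|.
  apply: (@fcard_order_ge _ _ phi_inj 4 [predC A3]).
    move=> x; rewrite !inE => Nx; have := order_ge3 x; move: Nx.
    by case: (forder phi x) => [|[|[|[|n]]]].
  by move=> x y /eqP <-; rewrite !inE order_phi.
have HC : #|{: darts P}| = #|A3| + #|[predC A3]| by rewrite cardC.
have HS : #|{: darts P}| = #|Sp| + #|[predC Sp]| by rewrite cardC.
have HT : fcard phi A3 <= #|Sp|.
  rewrite /n_comp_mem; apply: (leq_trans _ (leq_imset_card (froot phi) Sp)).
  apply: subset_leq_card; apply/subsetP => r; rewrite !inE => /andP[rr rA].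
  have [j Sj] := Htri r (eqP rA).
  apply/imsetP; exists (iter j phi r) => //.
  rewrite -(rootP symf (fconnect_iter phi j r)).
  by apply/esym/eqP.
move: HE; rewrite HF.
lia.
Qed.

End Core.

Ltac killU U := repeat (case: eqP => [?|_]; [first [done | subst; move: U; rewrite /= ?inE ?eqxx ?orbT //= ] | ]); try done.

Lemma ends_an (T : finType) (side : T -> bool) (a1 b1 a2 b2 v w : T) :
  side a1 != side b1 -> v \in [:: a1; b1; a2; b2] -> side a1 != side v ->
  ~~ same_edge (a1, v) (a1, b1) -> w \in [:: a1; b1; a2; b2] -> side v != side w ->
  ~~ same_edge (v, w) (a1, b1) -> ~~ same_edge (v, w) (a2, b2) -> w = a1.
Proof.
move=> s11 Hv sv n1 Hw sw n2 n3.
move: Hv Hw sv n1 sw n2 n3; rewrite !inE.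
case/or4P => /eqP -> ; case/or4P => /eqP -> //;
  rewrite /same_edge /= ?eqxx /= ?orbT //;
  move: s11; case: (side a1); case: (side b1); case: (side a2); case: (side b2) => //.
Qed.

Section Gen.
Variables (T1 T2 : finType) (g : rel T1) (h : rel T2).
Hypotheses (sg : simple_graph g) (sh : simple_graph h).
Hypotheses (c1 : #|T1| = 4) (c2 : #|T2| = 3).
Local Notation T := (T1 + T2)%type.
Local Notation e := (join g h).
Variables (k : nat) (cr : 'I_k -> (T * T) * (T * T)).
Hypothesis Hco : crossings_ok e cr.
Hypothesis Hk : forall i j : 'I_k, i = j.
Local Notation V := (T + 'I_k)%type.
Local Notation P := (planarization e cr).

Definition side (t : T) : bool := if t is inl _ then true else false.

Lemma join_sym : symmetric e.
Proof.
case: sg => sg1 _; case: sh => sh1 _.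
by case=> [a|a] [b|b] //=; rewrite ?sg1 ?sh1.
Qed.

Lemma join_irr : irreflexive e.
Proof. case: sg => _ sg2; case: sh => _ sh2. by case=> a /=. Qed.

Lemma join_side u v : side u != side v -> e u v.
Proof. by case: u => a; case: v => b. Qed.

Lemma same_edge_sym (u v : T) q : same_edge (u, v) q = same_edge (v, u) q.
Proof. by rewrite /same_edge /= orbC andbC [X in _ || X]andbC. Qed.

Lemma crossed_sym u v : crossed cr u v = crossed cr v u.
Proof. by apply: eq_existsb => i; rewrite !(same_edge_sym u v). Qed.

Lemma P_sym : symmetric P.
Proof.
case=> [u|i] [v|j] //=; by rewrite join_sym crossed_sym.
Qed.

Lemma P_irr : irreflexive P.
Proof. by case=> [u|i] //=; rewrite join_irr. Qed.


Definition partner (q : (T * T) * (T * T)) (u : T) : T :=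
  if u == q.1.1 then q.1.2 else if u == q.1.2 then q.1.1
  else if u == q.2.1 then q.2.2 else q.2.1.

Lemma partnerP q (u v : T) : uniq (ends4 q) ->
  same_edge (u, v) q.1 || same_edge (u, v) q.2 -> v = partner q u.
Proof.
case: q => [[a b] [c d]] U; rewrite /same_edge /partner /=.
case/orP=> /orP[] /andP[/eqP-> /eqP->]; rewrite ?eqxx //;
  killU U.
Qed.

Lemma crossedE u v : crossed cr u v ->
  exists i, same_edge (u, v) (cr i).1 || same_edge (u, v) (cr i).2.
Proof. by case/existsP => i H; exists i. Qed.

Lemma uniq_cr i : uniq (ends4 (cr i)).
Proof. by case: Hco => H _; case: (H i). Qed.

Lemma crossed_uniq u v1 v2 : crossed cr u v1 -> crossed cr u v2 -> v1 = v2.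
Proof.
move=> /crossedE [i H1] /crossedE [j H2]; rewrite (Hk j i) in H2.
by rewrite (partnerP (uniq_cr i) H1) (partnerP (uniq_cr i) H2).
Qed.


Lemma card_opp (u : T) : 3 <= #|[pred v : T | side v != side u]|.
Proof.
case: u => a.
  have inj : injective (@inr T1 T2) by move=> x y [].
  rewrite -c2 -(card_image inj T2); apply: subset_leq_card.
  by apply/subsetP => v /imageP [b _ ->].
have inj : injective (@inl T1 T2) by move=> x y [].
apply: (@leq_trans #|T1|); first by rewrite c1.
rewrite -(card_image inj T1); apply: subset_leq_card.
by apply/subsetP => v /imageP [b _ ->].
Qed.

Lemma card_opp_unc (u : T) : 2 <= #|[pred v : T | (side v != side u) && ~~ crossed cr u v]|.
Proof.
have H3 := card_opp u.
case: (pickP [pred v | crossed cr u v]) => [p /= Hp | H0].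
  set O := [pred v : T | side v != side u] in H3 *.
  have HD := cardD1 p O.
  apply: (@leq_trans #|[predD1 O & p]|).
    move: H3; rewrite HD; case: (p \in O) => /=; rewrite ?add1n ?add0n ?ltnS //; exact: ltnW.
  apply: subset_leq_card; apply/subsetP => v; rewrite !inE => /andP[np ->] /=.
  by apply/negP => Hv; move/eqP: np; apply; apply: (crossed_uniq Hv Hp).
apply: (leq_trans (ltnW H3)); apply: subset_leq_card; apply/subsetP => v.
by rewrite !inE => ->; have := H0 v; rewrite /= => ->.
Qed.

Lemma two_nb (x : V) : exists z1 z2, [/\ z1 != z2, P x z1 & P x z2].
Proof.
case: x => [u|i].
  have := card_opp_unc u; case/card_gt1P => v1 [v2 [H1 H2 N]].
  move: H1 H2; rewrite !inE => /andP[s1 c1'] /andP[s2 c2'].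
  exists (inl v1), (inl v2); split => //=; rewrite join_side // eq_sym //.
have U := uniq_cr i.
exists (inl (cr i).1.1), (inl (cr i).1.2); split => /=.
- apply/negP => /eqP [E]; move: U; rewrite /ends4 /= E !inE eqxx //.
- by rewrite /ends4 !inE eqxx.
- by rewrite /ends4 !inE eqxx orbT.
Qed.

Lemma Pdeg x y : P x y -> exists z, P x z /\ z != y.
Proof.
move=> _; have [z1 [z2 [N H1 H2]]] := two_nb x.
case: (z1 =P y) => [E|N1]; last by exists z1; split => //; apply/eqP.
by exists z2; split => //; rewrite -E eq_sym.
Qed.

Lemma V_card : #|{: V}| = 7 + k.
Proof. by rewrite !card_sum c1 c2 card_ord. Qed.

Lemma iso0 : #|[pred v : V | [forall w, ~~ P v w]]| = 0.
Proof.
apply: eq_card0 => v; rewrite !inE; apply/negP => /forallP H.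
by have [z1 [z2 [_ Hz _]]] := two_nb v; move: (H z1); rewrite Hz.
Qed.


Variables (sigma alpha : {perm darts P}).
Hypothesis pm : plane_map sigma alpha.
Local Notation phi := (sigma \o alpha).

Definition isr (x : V) : bool := if x is inr _ then true else false.

Definition ss (d : darts P) : bool :=
  match (val d).1, (val d).2 with
  | inl u, inl v => side u == side v
  | _, _ => false
  end.

Definition Sp (d : darts P) : bool :=
  ss d || [&& isr (val d).1, forder phi d == 3 & ~~ ss (phi d)].

Lemma Sp_help x : forder phi x = 3 -> isr (val x).1 -> Sp x || Sp (phi x).
Proof.
move=> o3 r; rewrite /Sp o3 r eqxx /=.
by case: (ss (phi x)); rewrite ?orbT.
Qed.

Lemma triangle d : forder phi d = 3 -> exists j, Sp (iter j phi d).
Proof.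
move=> o3.
have E3 : phi (phi (phi d)) = d by have := fingraph.iter_order (@phi_inj _ _ sigma alpha) d; rewrite o3.
have o1 : forder phi (phi d) = 3 by rewrite order_phi.
have o2 : forder phi (phi (phi d)) = 3 by rewrite !order_phi.
have s1 := src_phi pm d.
have s2 := src_phi pm (phi d).
have s0 := src_phi pm (phi (phi d)); rewrite E3 in s0.
case R0: (isr (val d).1).
  by case/orP: (Sp_help o3 R0) => H; [exists 0 | exists 1].
case R1: (isr (val (phi d)).1).
  by case/orP: (Sp_help o1 R1) => H; [exists 1 | exists 2].
case R2: (isr (val (phi (phi d))).1).
  by case/orP: (Sp_help o2 R2); rewrite ?E3 => H; [exists 2 | exists 0].
move: R0 R1 R2 s0 s1 s2.
case Ed0: (val d).1 => [u0|] // _; case Ed1: (val (phi d)).1 => [u1|] // _;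
  case Ed2: (val (phi (phi d))).1 => [u2|] // _ s0 s1 s2.
case: (side u0 =P side u1) => [E|N1].
  by exists 0; change (Sp d); rewrite /Sp /ss; change (sval d) with (val d); change (sval (phi d)) with (val (phi d)); rewrite Ed0 -s1 Ed1 E eqxx.
case: (side u1 =P side u2) => [E|N2].
  by exists 1; change (Sp (phi d)); rewrite /Sp /ss; change (sval (phi d)) with (val (phi d)); rewrite Ed1 -s2 Ed2 E eqxx.
exists 2; change (Sp (phi (phi d))); rewrite /Sp /ss; change (sval (phi (phi d))) with (val (phi (phi d))); rewrite Ed2 -s0 ?Ed0.
by move: N1 N2; case: (side u0); case: (side u1); case: (side u2).
Qed.


Lemma cross_of i (x y : T) : same_edge (x, y) (cr i).1 || same_edge (x, y) (cr i).2 -> crossed cr x y.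
Proof. by move=> H; apply/existsP; exists i. Qed.

Lemma alpha_val d : val (alpha d) = ((val d).2, (val d).1).
Proof.
case: pm => Ha _ _ _; case: (Ha d) => h1 h2.
by rewrite [LHS]surjective_pairing h1 h2.
Qed.

Lemma out_step d i a : (val d).1 = inr i -> (val d).2 = inl a -> Sp d ->
  exists v (d' : darts P), [/\ v \in ends4 (cr i), side a != side v, ~~ crossed cr a v,
     val d' = (inr i, inl v) & sigma d' = d].
Proof.
move=> s0 t0; rewrite /Sp /ss s0 /= => /andP[/eqP o3 nb].
have E3 : phi (phi (phi d)) = d by have := fingraph.iter_order (@phi_inj _ _ sigma alpha) d; rewrite o3.
have s1 := src_phi pm d.
have s2 := src_phi pm (phi d).
have s3 := src_phi pm (phi (phi d)); rewrite E3 s0 in s3.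
have P2 := valP (phi (phi d)); rewrite /= -s3 in P2.
case Ey: (val (phi (phi d))).1 P2 => [v|j] //= Hv.
have P1 := valP (phi d); rewrite /= s1 t0 -s2 Ey /= in P1.
case/andP: P1 => _ nc.
exists v, (alpha (phi (phi d))); split => //.
- move: nb; rewrite /ss s1 t0 -s2 Ey.
  by case: (side a =P side v).
- by rewrite alpha_val Ey -s3.
Qed.


Hypothesis Hrot : forall (i : 'I_k) (d : darts P),
  (val d).1 = inr i -> (val d).2 = inl (cr i).1.1 ->
  (val (sigma (sigma d))).2 = inl (cr i).1.2.

Lemma extra i : side (cr i).1.1 != side (cr i).1.2 ->
  exists d : darts P, (val d).1 = inr i /\ ~~ Sp d.
Proof.
move=> s11.
have Pd1 : P (inr i) (inl (cr i).1.1) by rewrite /= /ends4 !inE eqxx.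
pose d1 : darts P := exist (fun p => P p.1 p.2) (inr i, inl (cr i).1.1) Pd1.
case S1: (Sp d1); last by exists d1; rewrite S1.
have H1a : (val d1).1 = inr i by [].
have H1b : (val d1).2 = inl (cr i).1.1 by [].
have [v [d2 [Hv sv ncv vd2 sd2]]] := out_step H1a H1b S1.
case S2: (Sp d2); last by exists d2; rewrite vd2 S2.
have H2a : (val d2).1 = inr i by rewrite vd2.
have H2b : (val d2).2 = inl v by rewrite vd2.
have [w [d3 [Hw sw ncw vd3 sd3]]] := out_step H2a H2b S2.
have Ew : w = (cr i).1.1.
  move: Hv Hw; case E: (cr i) s11 sv ncv ncw => [[a1 b1] [a2 b2]] /= s11 sv ncv ncw Hv Hw.
  apply: (ends_an s11 Hv sv _ Hw sw).
  - by apply: contra ncv => H; apply: (cross_of (i:=i)); rewrite E /= H.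
  - by apply: contra ncw => H; apply: (cross_of (i:=i)); rewrite E /= H.
  - by apply: contra ncw => H; apply: (cross_of (i:=i)); rewrite E /= H orbT.
have E31 : d3 = d1 by apply: val_inj; rewrite vd3 Ew.
have := Hrot H1a H1b.
rewrite -{1}E31 sd3 sd2 /= => [[E]].
have U := uniq_cr i; move: U; rewrite /ends4 /= E !inE eqxx //.
Qed.


Definition Qg (p : V * V) : bool :=
  match p.1, p.2 with
  | inl u, inl v => side u != side v
  | inl _, inr _ => true
  | _, _ => false
  end.

Definition bipp (p : V * V) : bool :=
  match p.1, p.2 with
  | inl u, inl v => side u != side v
  | _, _ => false
  end.

Lemma nonsp_ge (b : bool) : (b -> exists d : darts P, isr (val d).1 && ~~ Sp d) ->
  #|[pred p : V * V | P p.1 p.2 && Qg p]| + b <= #|[predC Sp]|.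
Proof.
move=> Hb.
have sub : [pred d : darts P | Qg (val d)] \subset [predC Sp].
  apply/subsetP => -[[x y] Pxy]; rewrite inE /Qg /= => Hq.
  rewrite inE /in_mem /= /Sp /ss /=; move: Hq; case: x Pxy => // u; case: y => //= v Pxy.
  by move/negbTE => ->.
have H1 := card_darts_ge P Qg.
case: b Hb => Hb; last by rewrite addn0; apply: (leq_trans H1); apply: subset_leq_card.
have [d /andP[rd nd]] := Hb erefl.
have dn : d \notin [pred d : darts P | Qg (val d)].
  by rewrite !inE /Qg; move: rd; case: (val d).1.
rewrite addn1; apply: (leq_trans (n := #|[predU1 d & [pred d : darts P | Qg (val d)]]|)).
  by rewrite cardU1 dn add1n ltnS.
apply: subset_leq_card; apply/subsetP => x; rewrite !inE => /orP[/eqP -> //|].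
by move/(subsetP sub).
Qed.

Lemma card_bipp : 24 <= #|[pred p : V * V | bipp p]|.
Proof.
pose f (x : (T1 * T2) + (T1 * T2)) : V * V :=
  match x with
  | inl (a, b) => (inl (inl a), inl (inr b))
  | inr (a, b) => (inl (inr b), inl (inl a))
  end.
have finj : injective f.
  by case=> [[a b]|[a b]] [[a' b']|[a' b']] //= [-> ->].
have : #|image f {: (T1 * T2) + (T1 * T2)}| = 24.
  by rewrite (card_image finj) card_sum card_prod c1 c2.
move=> <-; apply: subset_leq_card; apply/subsetP => p /imageP [[[a b]|[a b]] _ ->].
  by rewrite !inE.
by rewrite !inE.
Qed.


Local Notation N := #|[pred p : V * V | P p.1 p.2 && Qg p]|.

Lemma count0 : (forall i : 'I_k, False) -> 24 <= N.
Proof.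
move=> no; apply: (leq_trans card_bipp); apply: subset_leq_card.
apply/subsetP => -[x y]; rewrite !inE /bipp /Qg /=.
case: x => // u; case: y => // v sv; rewrite /= sv andbT join_side //.
by apply/negP => /existsP [i _]; case: (no i).
Qed.

Lemma count1 i : 28 <= N + 2 * (side (cr i).1.1 != side (cr i).1.2)
                          + 2 * (side (cr i).2.1 != side (cr i).2.2).
Proof.
case E: (cr i) => [[a1 b1] [a2 b2]] /=.
pose Cs : seq (V * V) := [:: (inl a1, inl b1); (inl b1, inl a1); (inl a2, inl b2); (inl b2, inl a2)].
pose Is : seq (V * V) := [seq (inl t, inr i) | t <- ends4 (cr i)].
pose X := [pred p : V * V | bipp p && (p \notin Cs)].
pose Y := [pred p : V * V | p \in Is].
have S1 : #|[predU X & Y]| <= N.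
  apply: subset_leq_card; apply/subsetP => -[x y]; rewrite !inE => /orP[].
    rewrite /bipp /Qg /=; case: x => // u; case: y => // v /andP[sv nC].
    rewrite /= sv andbT join_side //; apply/negP => /existsP [j].
    rewrite (Hk j i) E /= => Hs; move: nC.
    rewrite /same_edge /= in Hs.
    by case/orP: Hs => /orP[] /andP[/eqP -> /eqP ->]; rewrite !eqxx ?orbT.
  by case/or4P => /eqP [-> ->] /=; rewrite /ends4 !inE eqxx ?orbT.
have S2 : #|[predU X & Y]| = #|X| + #|Y|.
  have := cardUI X Y; rewrite (@eq_card0 _ [predI X & Y]) ?addn0 //.
  move=> -[x y]; rewrite !inE /Is /bipp; apply/negP => /andP[/andP[]].
  case: x => // u; case: y => // v _ _.
  by rewrite -!pair_eqE /= !andbF.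
have S3 : #|Y| = 4.
  rewrite /Y (card_uniqP _) ?size_map //.
  rewrite map_inj_uniq ?uniq_cr //; by move=> ? ? [].
have S4 : #|X| + #|[pred p : V * V | bipp p && (p \in Cs)]| = #|[pred p : V * V | bipp p]|.
  rewrite -(cardID [pred p | p \in Cs] [pred p : V * V | bipp p]) addnC.
  congr (_ + _); apply: eq_card => p; by rewrite !inE andbC.
have S5 : #|[pred p : V * V | bipp p && (p \in Cs)]| <= 2 * (side a1 != side b1) + 2 * (side a2 != side b2).
  apply: (leq_trans (n := #|filter bipp Cs|)).
    apply: subset_leq_card; apply/subsetP => q; rewrite !inE mem_filter /in_mem /=. by case/andP => -> /or4P[] ->; rewrite ?orbT.
  apply: (leq_trans (card_size _)).
  rewrite /Cs /= /bipp /= [side b1 == _]eq_sym [side b2 == _]eq_sym.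
  by case: (side a1 != side b1); case: (side a2 != side b2).
have S6 := card_bipp.
lia.
Qed.

Hypothesis Hk1 : k <= 1.

Lemma final : False.
Proof.
have [t _] : exists t : T1, t \in T1 by apply/card_gt0P; rewrite c1.
have Hc := core pm P_sym P_irr Pdeg (inl (inl t) : V) triangle.
rewrite V_card iso0 addn0 in Hc.
have Hnb := @nonsp_ge.
case: (posnP k) => [k0 | kp].
  have no : forall i : 'I_k, False by case=> i; rewrite k0.
  have H0 := count0 no; have H2 := Hnb false (fun H => False_ind _ (notF H)).
  have := leq_trans (leq_add (leq_add H0 (leqnn false)) (leqnn 8)) (leq_trans (leq_add H2 (leqnn 8)) Hc).
  lia.
have k1 : k = 1 by apply/eqP; rewrite eqn_leq Hk1 kp.
pose i0 : 'I_k := Ordinal kp.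
have H1 := count1 i0.
set b := side (cr i0).1.1 != side (cr i0).1.2 in H1.
have Hb : b -> exists d : darts P, isr (val d).1 && ~~ Sp d.
  by move=> s11; have [d [dd nd]] := extra s11; exists d; rewrite dd nd.
have H2 := Hnb b Hb.
have H3 := leq_trans (leq_add H2 (leqnn 8)) Hc.
clear Hb H2; move: H1 H3; set N0 := #|_|; rewrite -/N0.
case: b; case: (_ != _); move: N0 => N0; lia.
Qed.

End Gen.

Theorem lemma10 (T1 T2 : finType) (g : rel T1) (h : rel T2) :
  simple_graph g -> simple_graph h -> #|T1| = 4 -> #|T2| = 3 ->
  ~ class_C0 (join g h).
Proof.
move=> sg sh c1 c2 [k [cr [sigma [alpha [[Hco Hpm Hrot] Hdisj]]]]].
have Hk1 : k <= 1.
  rewrite leqNgt; apply/negP => k2.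
  have k0 : 0 < k by apply: ltn_trans k2.
  pose i0 : 'I_k := Ordinal k0.
  pose i1 : 'I_k := Ordinal k2.
  have D := Hdisj i0 i1 isT.
  have U0 := uniq_cr Hco i0; have U1 := uniq_cr Hco i1.
  have U : uniq (ends4 (cr i0) ++ ends4 (cr i1)).
    rewrite cat_uniq U0 U1 andbT; move: D; rewrite disjoint_sym disjoint_has.
    by apply: contra => /hasP [x H1 H2]; apply/hasP; exists x.
  have := max_card (mem (ends4 (cr i0) ++ ends4 (cr i1))).
  by rewrite (card_uniqP U) card_sum c1 c2.
have Hk : forall i j : 'I_k, i = j.
  move=> i j; apply: ord_inj; have := ltn_ord i; have := ltn_ord j; lia.
exact: (final sg sh c1 c2 Hco Hk Hpm Hrot Hk1).
Qed.
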